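(* Let $q$ be a prime power, $e\ge 2$, $r$ a positive integer, $a\in\mathbb{F}_{q^e}$ with $a\neq 0$, $f(x)=x^r(x^{q-1}+a)$, and $\ell=q^{e-1}+\cdots+q+1$. If $r\bmod \ell\neq hq+1$ for every integer $h$, then $f(x)$ does not permute $\mathbb{F}_{q^e}$.
   Context: $r\bmod\ell$ denotes the least nonnegative residue of $r$ modulo $\ell$. *)

(* Defs.v *)
From mathcomp Require Import all_boot all_order all_algebra all_field.
Set Implicit Arguments. Unset Strict Implicit. Unset Printing Implicit Defensive.

Definition prime_power (q : nat) : Prop :=
  exists p k : nat, prime p /\ (0 < k)%N /\ q = (p ^ k)%N.

Definition ell (q e : nat) : nat := (\sum_(i < e) q ^ i)%N.

(* Main.v *)
Require Import Defs.
From mathcomp Require Import all_boot all_order all_algebra all_field.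
From mathcomp Require Import zify.
Import GRing.Theory.

Lemma comb q K L P r : 2 <= q -> 1 <= K -> L = q*K+1 -> L = P + K ->
  (r %% L) %% q != 1 -> exists2 j, j < P & L %| r*K + j.
Proof.
move=> q2 K1 HL HP hv.
have L0 : 0 < L by lia.
have hr := divn_eq r L. have hRL := ltn_pmod r L0.
move: hr hRL hv; set R := r %% L; set d := r %/ L => hr hRL hv.
have hq := divn_eq R q. have hvq := ltn_pmod R (ltnW q2).
move: hq hvq hv; set u := R %/ q; set v := R %% q => hq hvq hv.
have uK : u * q <= q * K by nia.
have uK' : u <= K by nia.
case: (posnP v) => [v0|vpos].
  exists u; first nia.
  apply/dvdnP; exists (d * K + u). rewrite hr hq v0. nia.
have v2 : 2 <= v by lia.
have uK2 : u < K by nia.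
have vK : v * K <= (q-1) * K by nia.
exists (L + u - v * K); first nia.
apply/dvdnP; exists (d * K + u + 1). rewrite hr hq. nia.
Qed.
Local Open Scope ring_scope.

Lemma unit_pow (F : finFieldType) (x : F) : x != 0 -> x ^+ #|F|.-1 = 1.
Proof.
move=> nz; have := expf_card x.
have e : #|F| = #|F|.-1.+1 by rewrite prednK // ltnW // finNzRing_gt1.
rewrite {1}e exprS => h; apply: (mulfI nz); rewrite mulr1; exact: h.
Qed.

Lemma powsum_dvd (F : finFieldType) n : (0 < n)%N -> (#|F|.-1 %| n)%N ->
  #|F|%:R = 0 :> F -> \sum_(x : F) x ^+ n = -1.
Proof.
move=> n0 hd hc.
rewrite (bigD1 0) //= expr0n (gtn_eqF n0) add0r.
rewrite (eq_bigr (fun _ => 1)) => [|x nz]; last first.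
  by case/dvdnP: hd => c ->; rewrite mulnC exprM unit_pow // expr1n.
rewrite sumr_const.
have -> : #|[pred i : F | i != 0]| = #|F|.-1 by rewrite -(cardC1 0); apply: eq_card.
apply/eqP; rewrite -addr_eq0 -mulrSr prednK //; first by rewrite hc.
exact: (ltnW (finNzRing_gt1 F)).
Qed.

Lemma powsum_ndvd (F : finFieldType) n : ~~ (#|F|.-1 %| n)%N ->
  \sum_(x : F) x ^+ n = 0.
Proof.
move=> hn.
have [c nzc cn] : exists2 c : F, c != 0 & c ^+ n != 1.
  case: (boolP [exists c : F, (c != 0) && (c ^+ n != 1)]) => [/existsP[c /andP[]]|/existsPn H]; first by exists c.
  exfalso.
  have m0 : (0 < #|F|.-1)%N by rewrite -subn1 subn_gt0 finNzRing_gt1.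
  set m := #|F|.-1 in m0 hn H.
  have n0 : (0 < n %% m)%N by rewrite lt0n -/(dvdn m n).
  have nm : (n %% m < m)%N by rewrite ltn_mod.
  pose rs := enum (predC1 (0 : F)).
  suff : (m < size (('X^(n %% m) - (1 : F)%:P)%R : {poly F}))%N by rewrite size_XnsubC // ltnS leqNgt nm.
  have hs : size rs = m by rewrite -cardE cardC1.
  rewrite -[X in (X < _)%N]hs.
  apply: max_poly_roots.
  - by rewrite -size_poly_eq0 size_XnsubC.
  - apply/allP => x; rewrite mem_enum inE => nz.
    rewrite rootE !hornerE; move: (H x); rewrite (negbTE (nz : x != 0)) ?nz /= negbK => /eqP.
    rewrite {1}(divn_eq n m) exprD mulnC exprM unit_pow // expr1n mul1r => ->.
    by rewrite subrr.
  - by rewrite enum_uniq.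
have hS : \sum_(x : F) x ^+ n = c ^+ n * \sum_(x : F) x ^+ n.
  rewrite mulr_sumr (reindex_inj (mulfI nzc)) /=.
  by apply: eq_bigr => x _; rewrite exprMn.
apply/eqP; move: hS => /eqP; rewrite -subr_eq0 -{1}[\sum_(x : F) _]mul1r -mulrBl mulf_eq0.
by rewrite subr_eq0 eq_sym (negbTE cn).
Qed.
Lemma geo (F : finFieldType) (a y : F) P : [pchar F].-nat P -> P%:R = 0 :> F -> (1 < P)%N ->
  (y + a) ^+ P.-1 = \sum_(i < P) y ^+ (P.-1 - i) * (-a) ^+ i.
Proof.
move=> hp hP P1.
case: (eqVneq (y + a) 0) => [ya|ya].
  have -> : y = -a by rewrite -[y](addrK a) ya sub0r.
  rewrite addNr expr0n (_ : (P.-1 == 0)%N = false); last by lia.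
  rewrite (eq_bigr (fun _ => (-a) ^+ P.-1)) => [|i _]; last first.
    by rewrite -exprD subnK // -ltnS prednK // ltnW.
  by rewrite sumr_const card_ord -[in RHS]mulr_natr hP mulr0.
apply: (mulfI ya); rewrite -exprS prednK ?(ltnW P1) // exprDn_pchar //.
rewrite [in RHS](_ : y + a = y - - a); last by rewrite opprK.
rewrite -subrXX exprNn_pchar //.
by rewrite opprK.
Qed.
Lemma ell_recl q n : ell q n.+1 = (q * ell q n + 1)%N.
Proof. by rewrite /ell big_ord_recl expn0 big_distrr /= addnC; congr (_ + _)%N; apply: eq_bigr => i _; rewrite expnS. Qed.

Lemma ell_recr q n : ell q n.+1 = (ell q n + q ^ n)%N.
Proof. by rewrite /ell big_ord_recr. Qed.

Lemma ell_geo q n : (0 < q)%N -> ((q - 1) * ell q n + 1 = q ^ n)%N.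
Proof.
move=> q0; elim: n => [|n IH]; first by rewrite /ell big_ord0 muln0.
rewrite ell_recr expnS mulnDr addnAC IH.
move: (q ^ n)%N => x; nia.
Qed.

Theorem proposition4p1 (F : finFieldType) (q e r : nat) (a : F) :
  prime_power q -> #|F| = (q ^ e)%N -> (2 <= e)%N -> (0 < r)%N -> a != 0 ->
  (forall h : int, ((r %% ell q e)%N)%:Z != h * (q%:Z) + 1) ->
  ~ bijective (fun x : F => x ^+ r * (x ^+ (q - 1) + a)).
Proof.
move=> [p [k [pp [k0 qE]]]] hF he hr ha hR hb.
have finj := bij_inj hb.
have p2 := prime_gt1 pp.
have q2 : (2 <= q)%N.
  have : (p ^ 1 <= p ^ k)%N by rewrite leq_exp2l // ltnW.
  by rewrite expn1 -qE; lia.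
have pc : p \in [pchar F].
  by apply: (@card_finPcharP F p (k * e)) => //; rewrite hF qE expnM.
have pq : (p %| q)%N by rewrite qE dvdn_exp.
set K := ell q e.-1; set L := ell q e; set P := (q ^ e.-1)%N.
have e1 : e = e.-1.+1 by rewrite prednK // ltnW.
have hL1 : L = (q * K + 1)%N by rewrite /L e1 ell_recl.
have hL2 : L = (P + K)%N by rewrite /L e1 ell_recr addnC.
have hPK : ((q - 1) * K + 1 = P)%N by rewrite ell_geo // ltnW.
have hQ : #|F|.-1 = ((q - 1) * L)%N by rewrite hF -(@ell_geo q e (ltnW q2)) addn1.
have P2 : (2 <= P)%N.
  rewrite /P; have -> : e.-1 = (e.-2).+1 by lia.
  rewrite expnS; have := expn_gt0 q e.-2; rewrite (ltnW q2) /=; nia.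
have K1 : (1 <= K)%N by nia.
have hPm : P.-1 = ((q - 1) * K)%N by rewrite -hPK addn1.
have Pnat : [pchar F].-nat P.
  by rewrite (eq_pnat _ (pcharf_eq pc)) /P qE -expnM pnatX pnat_id.
have PR : P%:R = 0 :> F.
  by apply/eqP; rewrite -(dvdn_pcharf pc) /P dvdn_exp //; lia.
have QR : #|F|%:R = 0 :> F.
  by apply/eqP; rewrite -(dvdn_pcharf pc) hF dvdn_exp //; lia.
have hv : ((r %% L) %% q != 1)%N.
  apply/eqP => h; apply: (negP (hR ((r %% L) %/ q)%:Z)).
  rewrite -/L {1}(divn_eq (r %% L) q) h.
  by rewrite PoszD PoszM.
clearbody K L P.
have [j0 j0P j0d] := @comb _ _ _ _ r q2 K1 hL1 hL2 hv.
have uniqj : forall j, (j < P)%N -> (L %| r * K + j)%N -> j = j0.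
  move=> j jP jd.
  have : (r * K + j == r * K + j0 %[mod L])%N.
    by move: jd j0d; rewrite /dvdn => /eqP -> /eqP ->.
  have jL : (j < L)%N by rewrite hL2 ltn_addr.
  have j0L : (j0 < L)%N by rewrite hL2 ltn_addr.
  by rewrite eqn_modDl (modn_small jL) (modn_small j0L) => /eqP.
have hsum : \sum_(x : F) (x ^+ r * (x ^+ (q - 1) + a)) ^+ P.-1
          = \sum_(x : F) x ^+ P.-1.
  by rewrite [RHS](reindex_inj finj).
have rhs0 : \sum_(x : F) x ^+ P.-1 = 0.
  apply: powsum_ndvd; rewrite hQ hPm; apply/negP => /dvdn_leq h.
  have : (0 < (q - 1) * K)%N by rewrite muln_gt0 subn_gt0 q2.
  move/h; rewrite leq_pmul2l ?subn_gt0 // hL2; lia.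
have lhs : \sum_(x : F) (x ^+ r * (x ^+ (q - 1) + a)) ^+ P.-1
   = \sum_(i < P) (-a) ^+ i *
       (if (L %| r * K + (P.-1 - i))%N then -1 else 0).
  rewrite (eq_bigr (fun x => \sum_(i < P) (-a) ^+ i * x ^+ ((q - 1) * (r * K + (P.-1 - i))))); last first.
    move=> x _; rewrite exprMn (@geo F a (x ^+ (q - 1)) P Pnat PR P2) mulr_sumr.
    apply: eq_bigr => i _.
    rewrite mulrA mulrC -!exprM -exprD; congr (_ * x ^+ _).
    by rewrite hPm mulnDr mulnCA.
  rewrite exchange_big /=; apply: eq_bigr => i _.
  rewrite -mulr_sumr; congr (_ * _).
  have E0 : (0 < (q - 1) * (r * K + (P.-1 - i)))%N by rewrite muln_gt0 subn_gt0 q2 /= addn_gt0 muln_gt0 hr K1.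
  case: ifP => hd.
    by apply: powsum_dvd => //; rewrite hQ dvdn_pmul2l ?subn_gt0.
  by apply: powsum_ndvd; rewrite hQ dvdn_pmul2l ?subn_gt0 ?hd.
have hPP : (P.-1 < P)%N by rewrite ltn_predL ltnW.
have i0P : (P.-1 - j0 < P)%N by apply: leq_ltn_trans (leq_subr _ _) hPP.
move: hsum; rewrite lhs rhs0 (bigD1 (Ordinal i0P)) //= big1 ?addr0.
  rewrite (_ : P.-1 - (P.-1 - j0) = j0)%N; last by rewrite subKn // -ltnS prednK // ltnW.
  rewrite j0d mulrN1 => /eqP; rewrite oppr_eq0 expf_eq0 oppr_eq0 (negbTE ha) andbF.
  by [].
move=> i /eqP hi; case: ifP => hd; last by rewrite mulr0.
exfalso; apply: hi; apply: val_inj => /=.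
have := uniqj _ (leq_ltn_trans (leq_subr _ _) hPP) hd.
move=> h; rewrite -h subKn // -ltnS prednK ?ltn_ord //; exact: ltnW.
Qed.
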